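(* Consider the general CA-RRM with affine indices $u_f(A)=\alpha_f+\beta_f^\top\psi(A)$, $f\in\mathcal F$, assume $P(i\mid A)\in(0,1)$ for all $i\in A$ and all menus $A$ in the support, and impose the normalization $(\alpha_{f_0},\beta_{f_0})=(0,\mathbf 0)$ for a baseline rule $f_0$. Let $d=\dim\psi$. Suppose there exist $d+1$ feature values $x^{(0)},\dots,x^{(d)}$ such that: (G1) for each $k\in\{0,\dots,d\}$, the matrix $H^{(k)}$ obtained by stacking the row vectors $h_i(A)^\top$ over all multi-sided menus $A$ with $\psi(A)=x^{(k)}$ and all non-reference alternatives $i\in A\setminus\{i_0(A)\}$ has rank $|\mathcal F|-1$; (G2) the $(d+1)\times(d+1)$ matrix $X$ with $k$-th row $(1,(x^{(k)})^\top)$ has full rank. Then the full parameter vector $\{(\alpha_f,\beta_f)\}_{f\in\mathcal F}$ is globally identified (up to the normalization) from the population objects $\{P(i\mid A),\kappa^i(A),\psi(A)\}$: any two normalized parameter vectors generating the same choice probabilities on these menus coincide.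
   Context: General setting: a finite collection $\mathcal M$ of menus, each a finite set $A$ of alternatives with $|A|\ge2$. A finite rule library $\mathcal F$; each rule $f$ has an activity set $\mathcal A_f\subseteq\mathcal M$ and a recommendation $r_f(A)\in A$ for $A\in\mathcal A_f$. The recommending set is $\mathcal I_i(A)=\{f: A\in\mathcal A_f,\ r_f(A)=i\}$, the active set is $\mathcal F_A=\bigcup_{i\in A}\mathcal I_i(A)$, and $\kappa_f^i(A)=\mathbf 1\{f\in\mathcal I_i(A)\}$. The model (softmax-gated CA-RRM) gives $$P(i\mid A;\theta)=\frac{\sum_{f\in\mathcal I_i(A)}\exp(u_f(A))}{\sum_{g\in\mathcal F_A}\exp(u_g(A))},\qquad u_f(A)=\alpha_f+\beta_f^\top\psi(A),$$ with $\psi:\mathcal M\to\mathbb R^d$. A menu is multi-sided if at least two distinct alternatives are recommended by some active rule. For each multi-sided menu fix a reference alternative $i_0(A)$ with $\mathcal I_{i_0(A)}(A)\neq\varnothing$; for $i\in A\setminus\{i_0(A)\}$ let $r_i(A)=P(i\mid A)/P(i_0(A)\mid A)$ and let $h_i(A)\in\mathbb R^{|\mathcal F|}$ have entries $h_{i,f}(A)=\kappa_f^i(A)-r_i(A)\kappa_f^{i_0(A)}(A)$. Positive weights $\omega_f(x)=\exp(\alpha_f+\beta_f^\top x)$. *)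

(* Defs.v *)
From HB Require Import structures.
From mathcomp Require Import all_boot all_order all_algebra.
From mathcomp Require Import reals sequences exp.
Set Implicit Arguments. Unset Strict Implicit. Unset Printing Implicit Defensive.
Import Order.TTheory GRing.Theory Num.Theory.
Local Open Scope ring_scope.

Section CARRM.
Variables (R : realType) (Alt Rule : finType) (d : nat).
(* activity: act f A  <->  A \in 𝒜_f ;  recommendation r_f(A) = rec f A *)
Variables (act : Rule -> {set Alt} -> bool) (rec : Rule -> {set Alt} -> Alt).

Definition recset (i : Alt) (A : {set Alt}) : {set Rule} :=
  [set f | act f A && (rec f A == i)].

Definition activeset (A : {set Alt}) : {set Rule} :=
  \bigcup_(i in A) recset i A.

Definition kappa (f : Rule) (i : Alt) (A : {set Alt}) : R :=
  (f \in recset i A)%:R.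

Definition uidx (alpha : Rule -> R) (beta : Rule -> 'rV[R]_d)
  (psi : {set Alt} -> 'rV[R]_d) (f : Rule) (A : {set Alt}) : R :=
  alpha f + \sum_(j < d) beta f 0 j * psi A 0 j.

Definition Pmodel (alpha : Rule -> R) (beta : Rule -> 'rV[R]_d)
  (psi : {set Alt} -> 'rV[R]_d) (i : Alt) (A : {set Alt}) : R :=
  (\sum_(f in recset i A) expR (uidx alpha beta psi f A)) /
  (\sum_(g in activeset A) expR (uidx alpha beta psi g A)).

Definition multisided (A : {set Alt}) : bool :=
  [exists i in A, exists j in A, [&& i != j, recset i A != set0 & recset j A != set0]].

Definition hvec (P : Alt -> {set Alt} -> R) (i0 : {set Alt} -> Alt)
  (i : Alt) (A : {set Alt}) (f : Rule) : R :=
  kappa f i A - (P i A / P (i0 A) A) * kappa f (i0 A) A.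

Definition Hrows (M : {set {set Alt}}) (psi : {set Alt} -> 'rV[R]_d)
  (i0 : {set Alt} -> Alt) (x : 'rV[R]_d) : {set {set Alt} * Alt} :=
  [set p : {set Alt} * Alt | [&& p.1 \in M, multisided p.1, psi p.1 == x,
                                p.2 \in p.1 & p.2 != i0 p.1]].

Definition Hmat (M : {set {set Alt}}) (P : Alt -> {set Alt} -> R)
  (psi : {set Alt} -> 'rV[R]_d) (i0 : {set Alt} -> Alt) (x : 'rV[R]_d)
  : 'M[R]_(#|Hrows M psi i0 x|, #|Rule|) :=
  \matrix_(r < #|Hrows M psi i0 x|, c < #|Rule|)
    let p := enum_val r in hvec P i0 p.2 p.1 (enum_val c).

Definition Xmat (x : 'I_d.+1 -> 'rV[R]_d) : 'M[R]_(d.+1, 1 + d) :=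
  \matrix_(k < d.+1) row_mx (1%:M : 'rV[R]_1) (x k).

End CARRM.

(* Main.v *)
Require Import Defs.
From HB Require Import structures.
From mathcomp Require Import all_boot all_order all_algebra.
From mathcomp Require Import reals sequences exp.
From mathcomp Require Import ring lra.
Import Order.TTheory GRing.Theory Num.Theory.
Local Open Scope ring_scope.

Section Helpers.
Variables (R : realType) (Alt Rule : finType) (d : nat).
Variables (act : Rule -> {set Alt} -> bool) (rec : Rule -> {set Alt} -> Alt).

Lemma sum_kappa (w : Rule -> R) i A :
  \sum_f w f * kappa R act rec f i A = \sum_(f in recset act rec i A) w f.
Proof.
rewrite [RHS]big_mkcond /=; apply: eq_bigr => f _; rewrite /kappa.
by case: (f \in _); rewrite ?mulr1 ?mulr0.
Qed.

Lemma key (P : Alt -> {set Alt} -> R) (i0 : {set Alt} -> Alt)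
  (alpha : Rule -> R) (beta : Rule -> 'rV[R]_d) psi A i :
  0 < P (i0 A) A ->
  Pmodel act rec alpha beta psi i A = P i A ->
  Pmodel act rec alpha beta psi (i0 A) A = P (i0 A) A ->
  \sum_f expR (uidx alpha beta psi f A) * hvec act rec P i0 i A f = 0.
Proof.
move=> Hp Hi Hi0.
rewrite /hvec.
under eq_bigr do rewrite mulrBr mulrCA.
rewrite sumrB -mulr_sumr !sum_kappa -Hi -Hi0 /Pmodel.
set D := \sum_(g in activeset act rec A) _. set S := \sum_(f in recset act rec i A) _.
set T := \sum_(f in recset act rec (i0 A) A) _.
have HD : D != 0.
  apply/negP => /eqP D0; move: Hp; rewrite -Hi0 /Pmodel -/D -/T D0 invr0 mulr0.
  by rewrite ltxx.
have HT : T != 0.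
  apply/negP => /eqP T0; move: Hp; rewrite -Hi0 /Pmodel -/D -/T T0 mul0r.
  by rewrite ltxx.
by field; apply/andP.
Qed.
End Helpers.
Arguments key {R Alt Rule d act rec P i0 alpha beta psi A i}.
Lemma ker1 (F : fieldType) m n (H : 'M[F]_(m,n)) (w1 w2 : 'rV_n) c0 :
  \rank H = (n - 1)%N -> w1 *m H^T = 0 -> w2 *m H^T = 0 ->
  w1 0 c0 = 1 -> w2 0 c0 = 1 -> w1 = w2.
Proof.
move=> rH h1 h2 e1 e2.
have K1 : (w1 <= kermx H^T)%MS by apply/sub_kermxP.
have K2 : (w2 <= kermx H^T)%MS by apply/sub_kermxP.
have rK : \rank (kermx H^T) = 1%N.
  rewrite mxrank_ker mxrank_tr rH; case: n c0 {H w1 w2 rH h1 h2 K1 K2 e1 e2} => [[]//|n _].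
  by rewrite subn1 /= subSn // subnn.
have nz : w1 != 0.
  by apply/eqP => w0; move: e1; rewrite w0 mxE => /eqP; rewrite eq_sym oner_eq0.
have sK : (kermx H^T <= w1)%MS.
  by rewrite -(mxrank_leqif_sup K1).2 rank_rV nz rK.
have /sub_rVP [a ea] : (w2 <= w1)%MS by apply: submx_trans K2 sK.
move: e2; rewrite ea mxE e1 mulr1 => ->; by rewrite scale1r.
Qed.

Lemma kerfull (F : fieldType) m n (X : 'M[F]_(m,n)) (v : 'rV_n) :
  \rank X = n -> v *m X^T = 0 -> v = 0.
Proof.
move=> rX h; apply/eqP; rewrite -mxrank_eq0 -leqn0.
have sK : (v <= kermx X^T)%MS by apply/sub_kermxP.
by have := mxrankS sK; rewrite mxrank_ker mxrank_tr rX subnn.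
Qed.

Theorem theoremA1 (R : realType) (Alt Rule : finType) (d : nat)
  (M : {set {set Alt}})
  (act : Rule -> {set Alt} -> bool) (rec : Rule -> {set Alt} -> Alt)
  (psi : {set Alt} -> 'rV[R]_d)
  (P : Alt -> {set Alt} -> R)
  (i0 : {set Alt} -> Alt)
  (f0 : Rule)
  (x : 'I_d.+1 -> 'rV[R]_d) :
  (forall A, A \in M -> 1 < #|A|)%N ->
  (forall f A, A \in M -> act f A -> rec f A \in A) ->
  (forall A, A \in M -> multisided act rec A -> recset act rec (i0 A) A != set0) ->
  (forall A i, A \in M -> i \in A -> 0 < P i A < 1) ->
  (forall k : 'I_d.+1,
     \rank (Hmat act rec M P psi i0 (x k)) = (#|Rule| - 1)%N) ->
  \rank (Xmat (x)) = d.+1 ->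
  forall (alpha1 alpha2 : Rule -> R) (beta1 beta2 : Rule -> 'rV[R]_d),
  alpha1 f0 = 0 -> beta1 f0 = 0 ->
  alpha2 f0 = 0 -> beta2 f0 = 0 ->
  (forall A i, A \in M -> i \in A -> Pmodel act rec alpha1 beta1 psi i A = P i A) ->
  (forall A i, A \in M -> i \in A -> Pmodel act rec alpha2 beta2 psi i A = P i A) ->
  forall f, alpha1 f = alpha2 f /\ beta1 f = beta2 f.
Proof.
move=> _ Hrec Hi0 HP HH HX alpha1 alpha2 beta1 beta2 a10 b10 a20 b20 HM1 HM2.
pose w (alpha : Rule -> R) (beta : Rule -> 'rV[R]_d) k : 'rV[R]_#|Rule| :=
  \row_c expR (alpha (enum_val c) + \sum_j beta (enum_val c) 0 j * x k 0 j).
have Hw : forall alpha beta k,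
   (forall A i, A \in M -> i \in A -> Pmodel act rec alpha beta psi i A = P i A) ->
   w alpha beta k *m (Hmat act rec M P psi i0 (x k))^T = 0.
  move=> alpha beta k HM; apply/rowP => r; rewrite !mxE /w.
  under eq_bigr do rewrite !mxE.
  have := enum_valP r; set p := enum_val r.
  rewrite inE => /and5P [pM pms px pin pni0].
  have i0in : i0 p.1 \in p.1.
    have /set0Pn [g] := Hi0 _ pM pms.
    by rewrite inE => /andP [ga /eqP <-]; apply: Hrec.
  have Hpos : 0 < P (i0 p.1) p.1 by case/andP: (HP _ _ pM i0in).
  apply: etrans (key Hpos (HM _ _ pM pin) (HM _ _ pM i0in)).
  rewrite [RHS](reindex (fun c : 'I_#|Rule| => enum_val c)) /=; last by apply: onW_bij; apply: enum_val_bij.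
  by apply: eq_bigr => c _; rewrite /uidx -(eqP px).
have Hu : forall k f, alpha1 f + \sum_j beta1 f 0 j * x k 0 j
                    = alpha2 f + \sum_j beta2 f 0 j * x k 0 j.
  move=> k f.
  have e := @ker1 _ _ _ _ (w alpha1 beta1 k) (w alpha2 beta2 k) (enum_rank f0)
     (HH k) (Hw _ _ k HM1) (Hw _ _ k HM2).
  have h1 : forall alpha beta, alpha f0 = 0 -> beta f0 = 0 ->
      w alpha beta k 0 (enum_rank f0) = 1.
    move=> al be a0 b0; rewrite /w mxE enum_rankK a0 b0 add0r big1 ?expR0 //.
    by move=> j _; rewrite mxE mul0r.
  have := congr1 (fun v : 'rV[R]_#|Rule| => v 0 (enum_rank f)) (e (h1 _ _ a10 b10) (h1 _ _ a20 b20)).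
  by rewrite /w !mxE !enum_rankK; apply: expR_inj.
move=> f.
pose v : 'rV[R]_(1 + d) := row_mx (alpha1 f - alpha2 f)%:M (beta1 f - beta2 f).
have v0 : v = 0.
  apply: (@kerfull _ _ (1 + d) (Xmat x) v HX); apply/rowP => k; rewrite !mxE big_split_ord /= big_ord1.
  have sl : forall m n (i : 'I_m), split (lshift n i) = inl i :=
    fun m n i => unsplitK (inl i).
  have sr : forall m n (i : 'I_n), split (rshift m i) = inr i :=
    fun m n i => unsplitK (inr i).
  rewrite /v /Xmat !mxE sl.
  under eq_bigr do rewrite !mxE sr.
  rewrite !mxE eqxx !mulr1n mulr1.
  under eq_bigr do rewrite !mxE mulrBl.
  rewrite sumrB; move: (Hu k f); lra.
split.
  have := congr1 (fun u : 'rV[R]_(1 + d) => u 0 (lshift d 0)) v0.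
  rewrite /v row_mxEl !mxE eqxx mulr1n => /eqP; rewrite subr_eq0 => /eqP //.
apply/rowP => j.
have := congr1 (fun u : 'rV[R]_(1 + d) => u 0 (rshift 1 j)) v0.
rewrite /v row_mxEr !mxE => /eqP; rewrite subr_eq0 => /eqP //.
Qed.
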